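(* Let $V$ be a complex vector space of finite dimension $N$. Let $F\in \mathrm{End}(V\otimes V)$ be an involutive symmetry and let $R=R(q)$ be a family of Hecke symmetries depending analytically on $q$ near $q=1$ with $R(1)=F$ and with $R(q)$, $F$ compatible for each $q$. Let $r\in\mathrm{End}(V\otimes V)$ be defined by the expansion $R(q)F=I+h\,r+O(h^2)$, $q=e^h$. Define the $\mathrm{End}(V\otimes V)$-valued function $$ r(u,v)=\frac{F\,u}{u-v}-\frac{r}{2}. $$ Then (1) $r_{\overline{21}}(v,u)+r_{\overline{12}}(u,v)=0$; (2) $[r_{\overline{12}}(u,v), r_{\overline{13}}(u,w)]+[r_{\overline{12}}(u,v), r_{\overline{23}}(v,w)]+[r_{\overline{13}}(u,w), r_{\overline{23}}(v,w)]=0$ in $\mathrm{End}(V^{\otimes 3})$, for all pairwise distinct $u,v,w$ (with $u\ne v$ etc.).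
   Context: A braiding is an invertible $R\in\mathrm{End}(V\otimes V)$ with $(R\otimes I)(I\otimes R)(R\otimes I)=(I\otimes R)(R\otimes I)(I\otimes R)$; it is an involutive symmetry if $R^2=I$, a Hecke symmetry if $(R-qI)(R+q^{-1}I)=0$, $q\ne\pm1$. $X_{12}=X\otimes I$, $X_{23}=I\otimes X$. Compatibility of $R,F$: $R_{12}F_{23}F_{12}=F_{23}F_{12}R_{23}$ and $R_{23}F_{12}F_{23}=F_{12}F_{23}R_{12}$. Overlined indices: for $X=X(a,b)\in\mathrm{End}(V\otimes V)$, $X_{\overline{12}}(a,b)=X(a,b)_{12}$, $X_{\overline{13}}(a,b)=F_{23}X(a,b)_{12}F_{23}^{-1}$, $X_{\overline{23}}(a,b)=F_{12}F_{23}X(a,b)_{12}F_{23}^{-1}F_{12}^{-1}$, and $X_{\overline{21}}(a,b)=F\,X(a,b)\,F$ (valid since $F$ is involutive). $[A,B]=AB-BA$. *)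

(* Defs.v *)
From HB Require Import structures.
From mathcomp Require Import all_boot all_order all_algebra.
From mathcomp Require Import reals sequences.
From mathcomp Require Import complex mxtens.

Set Implicit Arguments.
Unset Strict Implicit.
Unset Printing Implicit Defensive.

Import Order.TTheory GRing.Theory Num.Theory.
Local Open Scope ring_scope.

(* V = C^N ; End(V (x) V) = 'M[C]_(N*N) ; End(V^{(x)3}) = 'M[C]_(N*N*N),
   tensor product = Kronecker product tensmx (index (i,j) |-> i*N + j). *)

Section TensorOps.
Variables (C : fieldType) (N : nat).

Definition op12 (X : 'M[C]_(N * N)) : 'M[C]_(N * N * N) :=
  X *t (1%:M : 'M[C]_N).

(* X_{23} = I (x) X, re-associated V(x)(V(x)V) = (V(x)V)(x)V *)
Definition op23 (X : 'M[C]_(N * N)) : 'M[C]_(N * N * N) :=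
  castmx (mulnA N N N, mulnA N N N) ((1%:M : 'M[C]_N) *t X).

Definition braiding (X : 'M[C]_(N * N)) : Prop :=
  X \in unitmx /\
  op12 X *m op23 X *m op12 X = op23 X *m op12 X *m op23 X.

Definition involutive_symmetry (X : 'M[C]_(N * N)) : Prop :=
  braiding X /\ X *m X = 1%:M.

Definition hecke_symmetry (q : C) (X : 'M[C]_(N * N)) : Prop :=
  braiding X /\ (X - q%:M) *m (X + q^-1%:M) = 0 /\ q != 1 /\ q != -1.

Definition compatible (R F : 'M[C]_(N * N)) : Prop :=
  op12 R *m op23 F *m op12 F = op23 F *m op12 F *m op23 R /\
  op23 R *m op12 F *m op23 F = op12 F *m op23 F *m op12 R.

Definition bar12 (X : 'M[C]_(N * N)) : 'M[C]_(N * N * N) := op12 X.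
Definition bar13 (F X : 'M[C]_(N * N)) : 'M[C]_(N * N * N) :=
  op23 F *m op12 X *m invmx (op23 F).
Definition bar23 (F X : 'M[C]_(N * N)) : 'M[C]_(N * N * N) :=
  op12 F *m op23 F *m op12 X *m invmx (op23 F) *m invmx (op12 F).
Definition bar21 (F X : 'M[C]_(N * N)) : 'M[C]_(N * N) := F *m X *m F.

Definition commutator {n : nat} (A B : 'M[C]_n) : 'M[C]_n := A *m B - B *m A.

Definition rfun (F r : 'M[C]_(N * N)) (u v : C) : 'M[C]_(N * N) :=
  (u / (u - v)) *: F - 2^-1 *: r.

End TensorOps.

Local Open Scope complex_scope.

Section Analytic.
Variables (R : realType) (N : nat).

Definition cseries_to (f : nat -> R[i]) (l : R[i]) : Prop :=
  forall eps : R, 0 < eps -> exists n0 : nat, forall n : nat, (n0 <= n)%N ->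
    `| \sum_(k < n) f k - l | < eps%:C.

Definition analytic_at1 (Rq : R -> 'M[R[i]]_(N * N)) : Prop :=
  exists (a : nat -> 'M[R[i]]_(N * N)) (rho : R), 0 < rho /\
    forall q : R, `|q - 1| < rho -> forall i j,
      cseries_to (fun k => a k i j * ((q - 1) ^+ k)%:C) (Rq q i j).

Definition first_order_coeff (Rq : R -> 'M[R[i]]_(N * N)) (F r : 'M[R[i]]_(N * N)) : Prop :=
  exists (K delta : R), 0 < delta /\
    forall h : R, `|h| < delta -> forall i j,
      `| (Rq (expR h) *m F - 1%:M - h%:C *: r) i j | <= (K * h ^+ 2)%:C.

End Analytic.

(* Main.v *)
Require Import Defs.
From Stdlib Require Import Ncring Ncring_tac.
From HB Require Import structures.
From mathcomp Require Import all_boot all_order all_algebra.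
From mathcomp Require Import reals sequences.
From mathcomp Require Import complex mxtens exp.
From mathcomp Require Import ring lra.
Import Order.TTheory GRing.Theory Num.Theory.
Local Open Scope ring_scope.
Set Implicit Arguments.
Unset Strict Implicit.

Section NC.
Variable T : pzRingType.
#[local] Instance T_ops : @Ring_ops T 0%R 1%R (@GRing.add T) (@GRing.mul T)
  (fun x y => x - y)%R (@GRing.opp T) (@eq T). Defined.
#[local] Instance T_ring : @Ring T 0%R 1%R (@GRing.add T) (@GRing.mul T)
  (fun x y => x - y)%R (@GRing.opp T) (@eq T) T_ops.
Proof.
split.
- exact: eq_equivalence.
- by move=> x y -> z t ->.
- by move=> x y -> z t ->.
- by move=> x y -> z t ->.
- by move=> x y ->.
- exact: add0r.
- exact: addrC.
- exact: addrA.
- exact: mul1r.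
- exact: mulr1.
- exact: mulrA.
- exact: mulrDl.
- move=> x y z; exact: (mulrDr z x y).
- by [].
- exact: subrr.
Qed.


Definition commr (a b : T) := a * b - b * a.
Definition CYB (P Q x : T) :=
  commr x (Q * x * Q) + commr x (P * Q * x * Q * P) + commr (Q * x * Q) (P * Q * x * Q * P).
Definition BH (F y E g hh : T) :=
  F * E * F + E + (y + E) * F * ((y + E) * F) - (hh + hh) * ((y + E) * F) + g * F + g * ((y + E) * F).
Definition RemE (P Q y e : T) :=
  commr y (Q * e * Q) + commr e (Q * y * Q) + commr e (Q * e * Q) + commr y (P * Q * e * Q * P)
  + commr e (P * Q * y * Q * P) + commr e (P * Q * e * Q * P) + commr (Q * y * Q) (P * Q * e * Q * P)
  + commr (Q * e * Q) (P * Q * y * Q * P) + commr (Q * e * Q) (P * Q * e * Q * P)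
  + (y + e) * (Q * (y + e) * Q) * (P * Q * (y + e) * Q * P)
  - (P * Q * (y + e) * Q * P) * (Q * (y + e) * Q) * (y + e).

Lemma qybe_of_braid (P Q s : T) :
  P * P = 1 -> Q * Q = 1 -> P * Q * P = Q * P * Q ->
  (s*P) * (P*Q*(s*P)*Q*P) * (s*P) = (P*Q*(s*P)*Q*P) * (s*P) * (P*Q*(s*P)*Q*P) ->
  s * (Q*s*Q) * (P*Q*s*Q*P) = (P*Q*s*Q*P) * (Q*s*Q) * s.
Proof.
move=> pp qq br bz.
have e1 : P * P - 1 = 0 by rewrite pp subrr.
have e2 : Q * Q - 1 = 0 by rewrite qq subrr.
have e3 : Q * P * Q - P * Q * P = 0 by rewrite br subrr.
have e4 : (s*P) * (P*Q*(s*P)*Q*P) * (s*P) - (P*Q*(s*P)*Q*P) * (s*P) * (P*Q*(s*P)*Q*P) = 0.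
  by rewrite bz subrr.
apply/eqP; rewrite -subr_eq0; apply/eqP.
transitivity (((s*P) * (P*Q*(s*P)*Q*P) * (s*P) - (P*Q*(s*P)*Q*P) * (s*P) * (P*Q*(s*P)*Q*P)) * (P * Q * P) +
  ((P * Q * s * P * Q * P * s) * (P * P - 1) * (Q * s * P * Q * P * P * Q * P) + (P * Q * s * P * Q * P * s * Q * s * P * Q) * (P * P - 1) * (Q * P) + (P * Q * s * P * Q * P * s * Q * s * P) * (Q * Q - 1) * (P) - (s) * (P * P - 1) * (Q * s * P * Q * P * s * P * P * Q * P) + (P * Q * s * P * Q * P * s * Q * s) * (P * P - 1) * (1) - (s * Q * s * P * Q * P * s) * (P * P - 1) * (Q * P) - (P * Q * s) * (Q * P * Q - P * Q * P) * (s * Q * s) + (s * Q * s) * (Q * P * Q - P * Q * P) * (s * Q * P))).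
  non_commutative_ring.
by rewrite e1 e2 e3 e4 !(mulr0, mul0r, addr0, add0r, oppr0, subr0, sub0r).
Qed.

Lemma cybe_final (P Q y k1 k2 k3 : T) :
  P * P = 1 -> Q * Q = 1 -> P * Q * P = Q * P * Q ->
  y * P + P * y = 1 ->
  (forall t, k1 * t = t * k1) -> (forall t, k2 * t = t * k2) -> (forall t, k3 * t = t * k3) ->
  k1 * k2 - k1 * k3 + k2 * k3 = k2 ->
  CYB P Q y = 0 ->
  commr (k1 * P - y) (Q * (k2 * P - y) * Q) + commr (k1 * P - y) (P * Q * (k3 * P - y) * Q * P)
  + commr (Q * (k2 * P - y) * Q) (P * Q * (k3 * P - y) * Q * P) = 0.
Proof.
move=> pp qq br hy c1 c2 c3 kk cy.
have e1 : P * P - 1 = 0 by rewrite pp subrr.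
have e2 : Q * Q - 1 = 0 by rewrite qq subrr.
have e3 : Q * P * Q - P * Q * P = 0 by rewrite br subrr.
have e4 : P * y - (1 - y * P) = 0.
  by rewrite -hy; apply/eqP; rewrite subr_eq0; apply/eqP; non_commutative_ring.
have e5 : k2 * k3 - (k2 - k1 * k2 + k1 * k3) = 0.
  by rewrite -{2}kk; non_commutative_ring.
have f1 : forall t, t * k1 - k1 * t = 0 by move=> t; rewrite c1 subrr.
have f2 : forall t, t * k2 - k2 * t = 0 by move=> t; rewrite c2 subrr.
have f3 : forall t, t * k3 - k3 * t = 0 by move=> t; rewrite c3 subrr.
transitivity (CYB P Q y + (0 - (P * Q * k3 * P * Q * P) * (Q * k2 - k2 * Q) * (P * Q) - (P * Q * k3 * P * Q) * (P * k2 - k2 * P) * (Q * P * Q) - (P * Q * k3 * P) * (Q * k2 - k2 * Q) * (P * Q * P * Q) - (P * Q * k3) * (P * k2 - k2 * P) * (Q * P * Q * P * Q) - (P) * (Q * k3 - k3 * Q) * (k2 * P * Q * P * Q * P * Q) - (1) * (P * k3 - k3 * P) * (Q * k2 * P * Q * P * Q * P * Q) + (1) * (Q * k2 - k2 * Q) * (P * Q * P * Q * k3 * P * Q * P) + (k2 * Q * P * Q * P) * (Q * k3 - k3 * Q) * (P * Q * P) + (k2 * Q * P * Q) * (P * k3 - k3 * P) * (Q * P * Q * P) + (k2 * Q * P) * (Q * k3 - k3 * Q) * (P * Q * P * Q * P) + (k2 * Q) * (P * k3 - k3 * P) * (Q * P * Q * P * Q * P) + (k2) * (Q * k3 - k3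 * Q) * (P * Q * P * Q * P * Q * P) + (1) * (k2 * k3 - (k2 - k1 * k2 + k1 * k3)) * (Q * P * Q * P * Q * P * Q * P) - (k1 * k2) * (Q * P * Q - P * Q * P) * (P * Q * P * Q * P) - (k1 * k2 * P * Q) * (P * P - 1) * (Q * P * Q * P) + (k1 * k3) * (Q * P * Q - P * Q * P) * (P * Q * P * Q * P) + (k1 * k3 * P * Q) * (P * P - 1) * (Q * P * Q * P) - (k3 * P) * (Q * k2 - k2 * Q) * (P * Q * P * Q * P * Q) - (k3) * (P * k2 - k2 * P) * (Q * P * Q * P * Q * P * Q) - (1) * (k3 * k2 - k2 * k3) * (P * Q * P * Q * P * Q * P * Q) - (1) * (k2 * k3 - (k2 - k1 * k2 + k1 * k3)) * (P * Q * P * Q * P * Q * P * Q) + (k1 * k2 * P) * (Q * P * Q - P * Q * P) * (P * Q * P * Q) + (k1 * k2) * (P * P - 1) * (Q * P * P * Q * P * Q) - (k1 * k3 * P) * (Q * P * Q - P * Q * P) * (P * Q * P * Q) - (k1 * k3) * (P * P - 1) * (Q * P * P * Q * P * Q) + (P) * (Q * k3 - k3 * Q) * (P * Q * P * Q * y * Q) + (P * Q * y * Q * P) * (Q * k2 - k2 * Q) * (P * Q) + (P * Q * y * Q) * (P * k2 - k2 * P) * (Q * P * Q) + (P * Q * y) * (Q * k2 - k2 * Q) * (P * Q * P * Q) + (P * Q) * (y * k2 - k2 * y) * (Q * P * Q * P * Q) + (P) * (Q * k2 - k2 * Q) * (y * Q * P * Q * P * Q) + (1) * (P * k2 - k2 *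 P) * (Q * y * Q * P * Q * P * Q) + (1) * (P * k3 - k3 * P) * (Q * P * Q * P * Q * y * Q) - (1) * (Q * k2 - k2 * Q) * (P * Q * P * Q * y * Q * P) - (Q * y * Q * P) * (Q * k3 - k3 * Q) * (P * Q * P) - (Q * y * Q) * (P * k3 - k3 * P) * (Q * P * Q * P) - (Q * y) * (Q * k3 - k3 * Q) * (P * Q * P * Q * P) - (Q) * (y * k3 - k3 * y) * (Q * P * Q * P * Q * P) - (1) * (Q * k3 - k3 * Q) * (y * Q * P * Q * P * Q * P) - (k2 * P) * (Q * P * Q - P * Q * P) * (P * Q * P * Q) - (k2) * (P * P - 1) * (Q * P * P * Q * P * Q) + (k2 * P * Q * y) * (Q * P * Q - P * Q * P) * (P * Q) + (k2 * P * Q * y * P * Q) * (P * P - 1) * (Q) + (k2) * (Q * P * Q - P * Q * P) * (P * Q * P * Q * P) + (k2 * P * Q) * (P * P - 1) * (Q * P * Q * P) - (k2) * (Q * P * Q - P * Q * P) * (P * Q * y * Q * P) - (k2 * P * Q) * (P * P - 1) * (Q * y * Q * P) + (k3 * P) * (Q * P * Q - P * Q * P) * (P * Q * y * Q) + (k3) * (P * P - 1) * (Q * P * P * Q * y * Q) - (k3 * Q * y) * (Q * P * Q - P * Q * P) * (P * Q * P) - (k3 * Q * y * P * Q) * (P * P - 1) * (Q * P) - (P * Q * k3 * P * Q) * (P * k1 - k1 * P) * (P) - (P * Q * k3 * P) * (Q * k1 - k1 * Q) * (P * P) - (P * Q * k3) * (P * k1 - k1 * P) * (Q * P * P) - (P)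 * (Q * k3 - k3 * Q) * (k1 * P * Q * P * P) - (1) * (P * k3 - k3 * P) * (Q * k1 * P * Q * P * P) + (k1 * P * P) * (Q * k3 - k3 * Q) * (P * Q * P) + (k1 * P) * (P * k3 - k3 * P) * (Q * P * Q * P) + (k1) * (P * k3 - k3 * P) * (P * Q * P * Q * P) - (k1 * k2 * P) * (Q * Q - 1) * (P * Q * P) + (k1 * k2 * Q) * (P * P - 1) * (Q * P * Q) + (k1 * k3) * (P * P - 1) * (Q * P * Q * P) + (k1 * k3 * P) * (Q * Q - 1) * (P * Q * P) - (k1 * k3 * Q) * (P * P - 1) * (Q * P * Q) - (k3 * P) * (Q * k1 - k1 * Q) * (P * Q * P * P) - (k3) * (P * k1 - k1 * P) * (Q * P * Q * P * P) - (1) * (k3 * k1 - k1 * k3) * (P * Q * P * Q * P * P) - (k1 * k3 * P * Q * P * Q) * (P * P - 1) * (1) + (P) * (Q * k3 - k3 * Q) * (P * Q * P * y) + (P * Q * y * Q) * (P * k1 - k1 * P) * (P) + (P * Q * y) * (Q * k1 - k1 * Q) * (P * P) + (P * Q) * (y * k1 - k1 * y) * (Q * P * P) + (P) * (Q * k1 - k1 * Q) * (y * Q * P * P) + (1) * (P * k1 - k1 * P) * (Q * y * Q * P * P) + (1) * (P * k3 - k3 * P) * (Q * P * Q * P * y) - (k1) * (P * P - 1) * (Q * y * Q * P) + (k1 * P * Q * y * Q) * (P * P - 1) * (1) + (k2 * P) * (Q * Q - 1) * (P * Q * P) - (k2 * P) * (Q * Q - 1) * (y * Q * P) + (k2 *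 P * Q * y * P) * (Q * Q - 1) * (1) - (k2 * Q) * (P * P - 1) * (Q * P * Q) + (k3 * P) * (Q * P * Q - P * Q * P) * (P * y) + (k3) * (P * P - 1) * (Q * P * P * y) + (k3 * Q) * (P * P - 1) * (Q * y * Q) - (k3 * Q * y * P) * (Q * Q - 1) * (P) - (y * P) * (Q * k3 - k3 * Q) * (P * Q * P) - (y) * (P * k3 - k3 * P) * (Q * P * Q * P) - (1) * (y * k3 - k3 * y) * (P * Q * P * Q * P) - (k3 * y * P) * (Q * P * Q - P * Q * P) * (P) - (k3 * y) * (P * P - 1) * (Q * P * P) - (Q * k2 * P) * (Q * k1 - k1 * Q) * (P) - (Q * k2) * (P * k1 - k1 * P) * (Q * P) - (1) * (Q * k2 - k2 * Q) * (k1 * P * Q * P) + (k1 * P) * (Q * k2 - k2 * Q) * (P * Q) + (k1) * (P * k2 - k2 * P) * (Q * P * Q) - (k1 * k2) * (P * P - 1) * (Q * P) + (k1 * k2 * P) * (Q * P * Q - P * Q * P) * (1) + (k1 * k2) * (P * P - 1) * (Q * P) + (k1 * k2) * (Q * Q - 1) * (P * Q) + (k1 * k3) * (P * P - 1) * (Q * P) - (k1 * k3 * P) * (Q * P * Q - P * Q * P) * (1) - (k1 * k3) * (P * P - 1) * (Q * P) + (k1 * k3) * (Q * P * Q - P * Q * P) * (P) + (k1 * k3 * P * Q) * (P * P - 1) * (1) - (k1 * k3) * (Q * Q - 1) * (P * Q) - (k2) * (Q * k1 - k1 * Q) * (P * Q * P) - (1) * (k2 * k1 - k1 * k2) * (Q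 * P * Q * P) - (k1 * k2) * (Q * P * Q - P * Q * P) * (P) - (k1 * k2 * P * Q) * (P * P - 1) * (1) + (1) * (Q * k2 - k2 * Q) * (P * Q * y) + (Q * y) * (Q * k1 - k1 * Q) * (P) + (Q) * (y * k1 - k1 * y) * (Q * P) + (1) * (Q * k1 - k1 * Q) * (y * Q * P) + (k2) * (P * P - 1) * (Q * P) - (k2) * (P * y - (1 - y * P)) * (Q * P) + (k2) * (Q * P * Q - P * Q * P) * (y) + (k2 * P * Q) * (P * y - (1 - y * P)) * (1) - (k2) * (Q * Q - 1) * (P * Q) + (k3 * Q) * (P * P - 1) * (y) + (k3) * (Q * Q - 1) * (y * Q) - (k3 * Q * y) * (P * P - 1) * (1) - (k3 * y * Q) * (P * P - 1) * (1) - (y) * (Q * k2 - k2 * Q) * (P * Q) - (1) * (y * k2 - k2 * y) * (Q * P * Q) - (k2 * y) * (Q * P * Q - P * Q * P) * (1))).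
  rewrite /CYB /commr; non_commutative_ring.
by rewrite cy e1 e2 e3 e4 e5 ?f1 ?f2 ?f3 !(mulr0, mul0r, addr0, add0r, oppr0, subr0, sub0r).
Qed.

Lemma hecke_expand (F r E q qi hh : T) :
  F * F = 1 -> q * qi = 1 ->
  (forall t, q * t = t * q) -> (forall t, qi * t = t * qi) -> (forall t, hh * t = t * hh) ->
  ((1 + hh * r + E) * F - q) * ((1 + hh * r + E) * F + qi) = 0 ->
  hh * (F * r * F + r - F - F) + BH F (hh * r) E (qi - q + (hh + hh)) hh = 0.
Proof.
move=> ff qq1 cq cqi ch H.
have e1 : F * F - 1 = 0 by rewrite ff subrr.
have e2 : q * qi - 1 = 0 by rewrite qq1 subrr.
have fq : forall t, t * q - q * t = 0 by move=> t; rewrite cq subrr.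
have fqi : forall t, t * qi - qi * t = 0 by move=> t; rewrite cqi subrr.
have fhh : forall t, t * hh - hh * t = 0 by move=> t; rewrite ch subrr.
transitivity (((1 + hh * r + E) * F - q) * ((1 + hh * r + E) * F + qi) - ((1) * (F * hh - hh * F) * (r * F) + (hh * r) * (F * F - 1) * (1) + (hh * r) * (F * qi - qi * F) * (1) + (hh) * (r * qi - qi * r) * (F) + (1) * (hh * qi - qi * hh) * (r * F) + (E) * (F * F - 1) * (1) + (E) * (F * qi - qi * F) * (1) + (1) * (E * qi - qi * E) * (F) + (1) * (F * F - 1) * (1) + (1) * (F * qi - qi * F) * (1) - (1) * (q * qi - 1) * (1))).
  rewrite /BH; non_commutative_ring.
by rewrite H ?e1 ?e2 ?fq ?fqi ?fhh !(mulr0, mul0r, addr0, add0r, oppr0, subr0, sub0r).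
Qed.

Lemma qybe_expand (P Q x e hh : T) :
  P * P = 1 -> Q * Q = 1 -> (forall t, hh * t = t * hh) ->
  (1 + hh * x + e) * (Q * (1 + hh * x + e) * Q) * (P * Q * (1 + hh * x + e) * Q * P) =
  (P * Q * (1 + hh * x + e) * Q * P) * (Q * (1 + hh * x + e) * Q) * (1 + hh * x + e) ->
  hh * hh * CYB P Q x + RemE P Q (hh * x) e = 0.
Proof.
move=> pp qq ch /eqP; rewrite -subr_eq0 => /eqP H.
have e1 : P * P - 1 = 0 by rewrite pp subrr.
have e2 : Q * Q - 1 = 0 by rewrite qq subrr.
have fhh : forall t, t * hh - hh * t = 0 by move=> t; rewrite ch subrr.
transitivity ((1 + hh * x + e) * (Q * (1 + hh * x + e) * Q) * (P * Q * (1 + hh * x + e) * Q * P) -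
  (P * Q * (1 + hh * x + e) * Q * P) * (Q * (1 + hh * x + e) * Q) * (1 + hh * x + e) - (0 - (P * Q * Q * P) * (Q * hh - hh * Q) * (x * Q * hh * x) - (P * Q * Q) * (P * hh - hh * P) * (Q * x * Q * hh * x) - (P * Q) * (Q * hh - hh * Q) * (P * Q * x * Q * hh * x) - (P) * (Q * hh - hh * Q) * (Q * P * Q * x * Q * hh * x) - (P) * (Q * hh - hh * Q) * (x * Q * P * Q * Q * hh * x) - (P) * (Q * hh - hh * Q) * (x * Q * P * Q * hh * x * Q) - (1) * (P * hh - hh * P) * (Q * Q * P * Q * x * Q * hh * x) - (1) * (P * hh - hh * P) * (Q * x * Q * P * Q * Q * hh * x) - (1) * (P * hh - hh * P) * (Q * x * Q * P * Q * hh * x * Q) + (1) * (Q * hh - hh * Q) * (x * Q * P * Q * hh * x * Q * P) - (hh * P * Q * Q * P * Q * x) * (Q * hh - hh * Q) * (x) - (hh * P * Q * Q * P * Q) * (x * hh - hh * x) * (Q * x) - (hh * P * Q * Q * P) * (Q * hh - hh * Q) * (x * Q * x) - (hh * P * Q * Q) * (P * hh - hh * P) * (Q * x * Q * x) - (hh * P * Q) * (Q * hh - hh * Q) * (P * Q * x * Q * x) - (hh * P) * (Q * hh - hh * Q) * (Q * P * Q * x * Q * x) - (hh * P * Q * x * Q * P * Q) * (Q * hh - hh * Q) * (x) - (hh * P * Q * x * Q * P) * (Q * hh - hh * Q) * (Q * x) - (hh * P * Q * x * Q * P) * (Q * hh - hh * Q) * (x * Q) - (hh * P * Q * x * Q)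 * (P * hh - hh * P) * (Q * Q * x) - (hh * P * Q * x * Q) * (P * hh - hh * P) * (Q * x * Q) - (hh * P * Q * x) * (Q * hh - hh * Q) * (P * Q * Q * x) - (hh * P * Q * x) * (Q * hh - hh * Q) * (P * Q * x * Q) - (hh * P * Q) * (x * hh - hh * x) * (Q * P * Q * Q * x) - (hh * P) * (Q * hh - hh * Q) * (x * Q * P * Q * Q * x) - (hh * P * Q) * (x * hh - hh * x) * (Q * P * Q * x * Q) - (hh * P) * (Q * hh - hh * Q) * (x * Q * P * Q * x * Q) - (hh) * (P * hh - hh * P) * (Q * Q * P * Q * x * Q * x) - (hh) * (P * hh - hh * P) * (Q * x * Q * P * Q * Q * x) - (hh) * (P * hh - hh * P) * (Q * x * Q * P * Q * x * Q) + (hh * Q * x * Q * P) * (Q * hh - hh * Q) * (x * Q * P) + (hh * Q * x * Q) * (P * hh - hh * P) * (Q * x * Q * P) + (hh * Q * x) * (Q * hh - hh * Q) * (P * Q * x * Q * P) + (hh * Q) * (x * hh - hh * x) * (Q * P * Q * x * Q * P) + (hh) * (Q * hh - hh * Q) * (x * Q * P * Q * x * Q * P) - (hh * hh * P) * (Q * Q - 1) * (P * Q * x * Q * x) - (hh * hh * P * Q * x * Q * P) * (Q * Q - 1) * (x) + (hh * x * Q * Q * P) * (Q * hh - hh * Q) * (x * Q * P) + (hh * x * Q * Q) * (P * hh - hh * P) * (Q * x * Q * P) + (hh * x * Q) * (Q * hh - hh * Q) * (P * Q * x * Q * P) + (hh * x) * (Q * hh - hh * Q) * (Q * P * Q * x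 * Q * P) + (hh * x) * (Q * hh - hh * Q) * (x * Q * P * Q * Q * P) + (hh) * (x * hh - hh * x) * (Q * Q * P * Q * x * Q * P) + (hh * hh * x) * (Q * Q - 1) * (P * Q * x * Q * P) + (hh) * (x * hh - hh * x) * (Q * x * Q * P * Q * Q * P) + (hh * hh * x * Q * x * Q * P) * (Q * Q - 1) * (P) - (P * Q * Q * P * Q * e) * (Q * hh - hh * Q) * (x) - (P * Q * Q * P * Q) * (e * hh - hh * e) * (Q * x) - (P * Q * Q * P) * (Q * hh - hh * Q) * (e * Q * x) - (P * Q * Q * P) * (Q * hh - hh * Q) * (x * Q * e) - (P * Q * Q) * (P * hh - hh * P) * (Q * e * Q * x) - (P * Q * Q) * (P * hh - hh * P) * (Q * x * Q * e) - (P * Q) * (Q * hh - hh * Q) * (P * Q * e * Q * x) - (P * Q) * (Q * hh - hh * Q) * (P * Q * x * Q * e) - (P * Q * e * Q * P * Q) * (Q * hh - hh * Q) * (x) - (P * Q * e * Q * P) * (Q * hh - hh * Q) * (Q * x) - (P * Q * e * Q) * (P * hh - hh * P) * (Q * Q * x) - (P * Q * e) * (Q * hh - hh * Q) * (P * Q * Q * x) - (P * Q) * (e * hh - hh * e) * (Q * P * Q * Q * x) - (P) * (Q * hh - hh * Q) * (Q * P * Q * e * Q * x) - (P) * (Q * hh - hh * Q) * (Q * P * Q * x * Q * e) - (P) * (Q * hh - hh * Q) * (e * Q * P * Q * Q * x) - (P) * (Q * hh - hh * Q) * (x * Q * P * Q * Q * e) - (1) * (P * hh - hh * P) * (Q *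 Q * P * Q * e * Q * x) - (1) * (P * hh - hh * P) * (Q * Q * P * Q * x * Q * e) - (1) * (P * hh - hh * P) * (Q * e * Q * P * Q * Q * x) - (1) * (P * hh - hh * P) * (Q * x * Q * P * Q * Q * e) + (e * Q * Q * P) * (Q * hh - hh * Q) * (x * Q * P) + (e * Q * Q) * (P * hh - hh * P) * (Q * x * Q * P) + (e * Q) * (Q * hh - hh * Q) * (P * Q * x * Q * P) + (e) * (Q * hh - hh * Q) * (Q * P * Q * x * Q * P) + (e) * (Q * hh - hh * Q) * (x * Q * P * Q * Q * P) + (1) * (e * hh - hh * e) * (Q * Q * P * Q * x * Q * P) + (1) * (e * hh - hh * e) * (Q * x * Q * P * Q * Q * P) - (hh * P) * (Q * Q - 1) * (P * Q * e * Q * x) - (hh * P) * (Q * Q - 1) * (P * Q * x * Q * e) - (hh * P * Q * e * Q * P) * (Q * Q - 1) * (x) - (hh * P * Q * x * Q * P) * (Q * Q - 1) * (e) + (hh * e) * (Q * Q - 1) * (P * Q * x * Q * P) + (hh * e * Q * x * Q * P) * (Q * Q - 1) * (P) + (hh * x) * (Q * Q - 1) * (P * Q * e * Q * P) + (hh * x * Q * e * Q * P) * (Q * Q - 1) * (P) - (P * Q * Q * P * Q) * (Q * hh - hh * Q) * (x) - (P) * (Q * Q - 1) * (P * Q * e * Q * e) - (P * Q * Q * P) * (Q * hh - hh * Q) * (Q * x) - (P * Q * Q * P) * (Q * hh - hh * Q) * (x * Q) - (P * Q * Q) * (P * hh - hh * P) * (Q * Q * x) - (P * Q * Q) * (P *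 hh - hh * P) * (Q * x * Q) - (P * Q) * (Q * hh - hh * Q) * (P * Q * Q * x) - (P * Q) * (Q * hh - hh * Q) * (P * Q * x * Q) - (P * Q * e * Q * P) * (Q * Q - 1) * (e) - (P) * (Q * hh - hh * Q) * (Q * P * Q * Q * x) - (P) * (Q * hh - hh * Q) * (Q * P * Q * x * Q) - (P) * (Q * hh - hh * Q) * (x * Q * P * Q * Q) - (1) * (P * hh - hh * P) * (Q * Q * P * Q * Q * x) - (1) * (P * hh - hh * P) * (Q * Q * P * Q * x * Q) - (1) * (P * hh - hh * P) * (Q * x * Q * P * Q * Q) + (Q * Q * P) * (Q * hh - hh * Q) * (x * Q * P) + (Q * Q) * (P * hh - hh * P) * (Q * x * Q * P) + (Q) * (Q * hh - hh * Q) * (P * Q * x * Q * P) + (1) * (Q * hh - hh * Q) * (Q * P * Q * x * Q * P) + (1) * (Q * hh - hh * Q) * (x * Q * P * Q * Q * P) + (e) * (Q * Q - 1) * (P * Q * e * Q * P) + (e * Q * e * Q * P) * (Q * Q - 1) * (P) - (hh * P) * (Q * Q - 1) * (P * Q * Q * x) - (hh * P) * (Q * Q - 1) * (P * Q * x * Q) - (hh * P * Q * x * Q * P) * (Q * Q - 1) * (1) + (hh) * (Q * Q - 1) * (P * Q * x * Q * P) + (hh * Q * x * Q * P) * (Q * Q - 1) * (P) - (hh * hh) * (P * P - 1) * (Q * x * Q * x) + (hh * hh * x * Q * x * Q) * (P * P - 1) * (1) + (hh * x) * (Q * Q - 1) * (P * Q * Q * P) - (P) * (Q * Q - 1) * (P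 * Q * Q * e) - (P) * (Q * Q - 1) * (P * Q * e * Q) - (P * Q * e * Q * P) * (Q * Q - 1) * (1) + (P * Q * e * Q) * (P * hh - hh * P) * (x) + (P * Q * e) * (Q * hh - hh * Q) * (P * x) + (P * Q) * (e * hh - hh * e) * (Q * P * x) + (P) * (Q * hh - hh * Q) * (e * Q * P * x) + (P) * (Q * hh - hh * Q) * (x * Q * P * e) + (1) * (P * hh - hh * P) * (Q * e * Q * P * x) + (1) * (P * hh - hh * P) * (Q * x * Q * P * e) + (1) * (Q * Q - 1) * (P * Q * e * Q * P) + (Q * e * Q * P) * (Q * Q - 1) * (P) - (e * P) * (Q * hh - hh * Q) * (x * Q * P) - (e) * (P * hh - hh * P) * (Q * x * Q * P) + (e) * (Q * Q - 1) * (P * Q * Q * P) - (1) * (e * hh - hh * e) * (P * Q * x * Q * P) - (hh) * (P * P - 1) * (Q * e * Q * x) - (hh) * (P * P - 1) * (Q * x * Q * e) + (hh * e * Q * x * Q) * (P * P - 1) * (1) + (hh * x * Q * e * Q) * (P * P - 1) * (1) - (1) * (P * P - 1) * (Q * e * Q * e) - (P) * (Q * Q - 1) * (P * Q * Q) + (1) * (Q * Q - 1) * (P * Q * Q * P) + (e * Q * e * Q) * (P * P - 1) * (1) - (hh) * (P * P - 1) * (Q * Q * x) - (hh) * (P * P - 1) * (Q * x * Q) + (hh * Q * x * Q) * (P * P - 1) * (1) + (hh * x * P) * (Q * Q - 1) * (P) - (1) * (P * P - 1) * (Q * Q * e) - (1) * (P * P - 1) * (Q * e * Q) + (Q * e *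 Q) * (P * P - 1) * (1) + (Q * e) * (Q * hh - hh * Q) * (x) + (Q) * (e * hh - hh * e) * (Q * x) + (1) * (Q * hh - hh * Q) * (e * Q * x) + (1) * (Q * hh - hh * Q) * (x * Q * e) + (e * P) * (Q * Q - 1) * (P) - (e) * (Q * hh - hh * Q) * (x * Q) - (1) * (e * hh - hh * e) * (Q * x * Q) - (1) * (P * P - 1) * (Q * Q) + (P) * (Q * Q - 1) * (P) - (hh) * (Q * Q - 1) * (x) + (hh * x) * (P * P - 1) * (1) - (1) * (Q * Q - 1) * (e) + (e) * (P * P - 1) * (1) + (1) * (P * P - 1) * (1) - (1) * (Q * Q - 1) * (1))).
  rewrite /CYB /RemE /commr; non_commutative_ring.
by rewrite H ?e1 ?e2 ?fhh !(mulr0, mul0r, addr0, add0r, oppr0, subr0, sub0r).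
Qed.

Lemma part1_alg (F r k kk hf : T) :
  F * F = 1 -> F * r * F + r = F + F -> kk + k = 1 -> hf + hf = 1 ->
  (forall t, k * t = t * k) -> (forall t, kk * t = t * kk) -> (forall t, hf * t = t * hf) ->
  F * (kk * F - hf * r) * F + (k * F - hf * r) = 0.
Proof.
move=> ff hk kk1 hf1 ck ckk chf.
have e1 : F * F - 1 = 0 by rewrite ff subrr.
have e2 : F * r * F - (F + F - r) = 0 by rewrite -hk addrK subrr.
have e3 : kk - (1 - k) = 0 by rewrite -kk1 addrK subrr.
have e4 : 1 - hf - hf = 0 by rewrite -addrA -opprD hf1 subrr.
have fk : forall t, t * k - k * t = 0 by move=> t; rewrite ck subrr.
have fkk : forall t, t * kk - kk * t = 0 by move=> t; rewrite ckk subrr.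
have fhf : forall t, t * hf - hf * t = 0 by move=> t; rewrite chf subrr.
transitivity ((1 - hf - hf) * F - ((1) * (F * hf - hf * F) * (r * F) - (F) * (kk - (1 - k)) * (F * F) + (1) * (F * k - k * F) * (F * F) + (hf) * (F * r * F - (F + F - r)) * (1) + (k) * (F * F - 1) * (F) - (1) * (F * F - 1) * (F))).
  non_commutative_ring.
by rewrite e4 ?e1 ?e2 ?e3 ?fk ?fkk ?fhf !(mulr0, mul0r, addr0, add0r, oppr0, subr0, sub0r).
Qed.

Lemma cy_scale (P Q x k : T) :
  (forall t, k * t = t * k) -> CYB P Q x = 0 -> CYB P Q (k * x) = 0.
Proof.
move=> ck H.
have fk : forall t, t * k - k * t = 0 by move=> t; rewrite ck subrr.
transitivity (k * k * CYB P Q x - ((P) * (Q * k - k * Q) * (x * Q * P * Q * k * x * Q) + (1) * (P * k - k * P) * (Q * x * Q * P * Q * k * x * Q) - (1) * (Q * k - k * Q) * (x * Q * P * Q * k * x * Q * P) + (k * P * Q * x * Q * P) * (Q * k - k * Q) * (x * Q) + (k * P * Q * x * Q) * (P * k - k * P) * (Q * x * Q) + (k * P * Q * x) * (Q * k - k * Q) * (P * Q * x * Q) + (k * P * Q) * (x * k - k * x) * (Q * P * Q * x * Q) + (k * P) * (Q * k - k * Q) * (x * Q * P * Q * x * Q) + (k) * (P * k - k * P) * (Q * x * Q * P * Q * x * Q) - (k * Q * x * Q * P) * (Q * k - k * Q) * (x * Q * P) - (k * Q * x * Q) * (P * k - k * P) * (Q * x * Q * P) - (k * Q * x) * (Q *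 k - k * Q) * (P * Q * x * Q * P) - (k * Q) * (x * k - k * x) * (Q * P * Q * x * Q * P) - (k) * (Q * k - k * Q) * (x * Q * P * Q * x * Q * P) + (P * Q * k * x * Q) * (P * k - k * P) * (x) + (P) * (Q * k - k * Q) * (x * Q * k * P * x) + (1) * (P * k - k * P) * (Q * x * Q * k * P * x) + (k * P * Q * x) * (Q * k - k * Q) * (P * x) + (k * P * Q) * (x * k - k * x) * (Q * P * x) + (k * P) * (Q * k - k * Q) * (x * Q * P * x) + (k) * (P * k - k * P) * (Q * x * Q * P * x) - (k * x * P) * (Q * k - k * Q) * (x * Q * P) - (k * x) * (P * k - k * P) * (Q * x * Q * P) - (k) * (x * k - k * x) * (P * Q * x * Q * P) + (1) * (Q * k - k * Q) * (x * Q * k * x) + (k * Q * x) * (Q * k - k * Q) * (x) + (k * Q) * (x * k - k * x) * (Q * x) + (k) * (Q * k - k * Q) * (x * Q * x) - (k * x) * (Q * k - k * Q) * (x * Q) - (k) * (x * k - k * x) * (Q * x * Q))).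
  rewrite /CYB /commr; non_commutative_ring.
by rewrite H ?fk !(mulr0, mul0r, addr0, add0r, oppr0, subr0, sub0r).
Qed.


Lemma compat_solve (P Q Y Z : T) :
  P * P = 1 -> Q * Q = 1 -> Y * Q * P = Q * P * Z -> Z = P * Q * Y * Q * P.
Proof.
move=> pp qq H.
have e1 : P * P - 1 = 0 by rewrite pp subrr.
have e2 : Q * Q - 1 = 0 by rewrite qq subrr.
have e3 : Y * Q * P - Q * P * Z = 0 by rewrite H subrr.
apply/eqP; rewrite -subr_eq0; apply/eqP.
transitivity (0 - ((P * Q) * (Y * Q * P - Q * P * Z) * (1) + (P) * (Q * Q - 1) * (P * Z) + (1) * (P * P - 1) * (Z))); first non_commutative_ring.
by rewrite e1 e2 e3 !(mulr0, mul0r, addr0, add0r, oppr0, subr0, sub0r).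
Qed.

Lemma hyx (P x hf : T) : P * P = 1 -> P * x * P + x = P + P -> hf + hf = 1 ->
  (forall t, hf * t = t * hf) -> hf * x * P + P * (hf * x) = 1.
Proof.
move=> pp H h2 ch.
have e1 : P * P - 1 = 0 by rewrite pp subrr.
have e2 : hf * (P * x * P + x - P - P) * P = 0 by rewrite -addrA -opprD H subrr mulr0 mul0r.
have e3 : hf + hf - 1 = 0 by rewrite h2 subrr.
have fhf : forall t, t * hf - hf * t = 0 by move=> t; rewrite ch subrr.
apply/eqP; rewrite -subr_eq0; apply/eqP.
transitivity (hf * (P * x * P + x - P - P) * P + (hf + hf - 1) - ((hf * P * x) * (P * P - 1) * (1) - (1) * (P * hf - hf * P) * (x) - (hf) * (P * P - 1) * (1) - (hf) * (P * P - 1) * (1))); first non_commutative_ring.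
by rewrite e2 e3 ?e1 ?fhf !(mulr0, mul0r, addr0, add0r, oppr0, subr0, sub0r).
Qed.

End NC.

Section Tens.
Variables (C : fieldType) (N : nat).
Local Notation M2 := 'M[C]_(N * N).
Local Notation M3 := 'M[C]_(N * N * N).

Lemma tens11 (m n : nat) : (1%:M : 'M[C]_m) *t (1%:M : 'M[C]_n) = 1%:M.
Proof.
apply/matrixP=> i j.
case: (mxtens_indexP i)=> i1 i2; case: (mxtens_indexP j)=> j1 j2.
rewrite tensmxE !mxE (inj_eq (can_inj (@mxtens_indexK _ _))) xpair_eqE.
by rewrite -natrM mulnb.
Qed.

Lemma castmxM n n' (e : n = n') (A B : 'M[C]_n) :
  castmx (e, e) (A *m B) = castmx (e, e) A *m castmx (e, e) B.
Proof. by case: n' / e; rewrite !castmx_id. Qed.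
Lemma castmx1 n n' (e : n = n') : castmx (e, e) (1%:M : 'M[C]_n) = 1%:M.
Proof. by case: n' / e; rewrite !castmx_id. Qed.
Lemma castmxD n n' (e : n = n') (A B : 'M[C]_n) :
  castmx (e, e) (A + B) = castmx (e, e) A + castmx (e, e) B.
Proof. by case: n' / e; rewrite !castmx_id. Qed.
Lemma castmxZ n n' (e : n = n') c (A : 'M[C]_n) :
  castmx (e, e) (c *: A) = c *: castmx (e, e) A.
Proof. by case: n' / e; rewrite !castmx_id. Qed.

Lemma tensDl m n p q (A B : 'M[C]_(m, n)) (D : 'M[C]_(p, q)) : (A + B) *t D = A *t D + B *t D.
Proof. by apply/matrixP=> i j; rewrite !mxE mulrDl. Qed.
Lemma tensDr m n p q (A : 'M[C]_(m, n)) (B D : 'M[C]_(p, q)) : A *t (B + D) = A *t B + A *t D.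
Proof. by apply/matrixP=> i j; rewrite !mxE mulrDr. Qed.
Lemma tensZl m n p q c (A : 'M[C]_(m, n)) (D : 'M[C]_(p, q)) : (c *: A) *t D = c *: (A *t D).
Proof. by apply/matrixP=> i j; rewrite !mxE mulrA. Qed.
Lemma tensZr m n p q c (A : 'M[C]_(m, n)) (D : 'M[C]_(p, q)) : A *t (c *: D) = c *: (A *t D).
Proof. by apply/matrixP=> i j; rewrite !mxE mulrCA. Qed.

Lemma op12M (A B : M2) : op12 (A *m B) = op12 A *m op12 B.
Proof. by rewrite /op12 tensmx_mul mulmx1. Qed.
Lemma op12_1 : op12 (1%:M : M2) = 1%:M.
Proof. by rewrite /op12 tens11. Qed.
Lemma op12D (A B : M2) : op12 (A + B) = op12 A + op12 B.
Proof. by rewrite /op12 tensDl. Qed.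
Lemma op12Z c (A : M2) : op12 (c *: A) = c *: op12 A.
Proof. by rewrite /op12 tensZl. Qed.
Lemma op12N (A : M2) : op12 (- A) = - op12 A.
Proof. by rewrite -scaleN1r op12Z scaleN1r. Qed.
Lemma op12B (A B : M2) : op12 (A - B) = op12 A - op12 B.
Proof. by rewrite op12D op12N. Qed.

Lemma op23M (A B : M2) : op23 (A *m B) = op23 A *m op23 B.
Proof. by rewrite /op23 -castmxM tensmx_mul mulmx1. Qed.
Lemma op23_1 : op23 (1%:M : M2) = 1%:M.
Proof. by rewrite /op23 tens11 castmx1. Qed.
Lemma op23D (A B : M2) : op23 (A + B) = op23 A + op23 B.
Proof. by rewrite /op23 tensDr castmxD. Qed.
Lemma op23Z c (A : M2) : op23 (c *: A) = c *: op23 A.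
Proof. by rewrite /op23 tensZr castmxZ. Qed.
End Tens.

Local Open Scope complex_scope.

Section Analytic.
Variable R : realType.
Local Notation C := R[i].

Lemma normC_real (h : R) : `|h%:C| = `|h|%:C.
Proof. by rewrite normc_def /= expr0n /= addr0 sqrtr_sqr. Qed.

Lemma realC_ge0 (a : R) : (0 <= a%:C) = (0 <= a).
Proof. exact: ler0c. Qed.

Definition bigO (m n k : nat) (f : R -> 'M[C]_(m, n)) : Prop :=
  exists (K : C) (d : R), 0 <= K /\ 0 < d /\
    forall h : R, 0 < `|h| < d -> forall i j, `|f h i j| <= K * (`|h| ^+ k)%:C.

Definition bigOs (k : nat) (s : R -> C) : Prop :=
  exists (K : C) (d : R), 0 <= K /\ 0 < d /\
    forall h : R, 0 < `|h| < d -> `|s h| <= K * (`|h| ^+ k)%:C.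

Lemma cpow_ge0 (h : R) k : 0 <= (`|h| ^+ k)%:C.
Proof. by rewrite ler0c exprn_ge0. Qed.

Lemma min_dom (d1 d2 h : R) : 0 < `|h| < Num.min d1 d2 -> 0 < `|h| < d1 /\ 0 < `|h| < d2.
Proof. by case/andP=> h0; rewrite lt_min => /andP[a b]; rewrite h0 a b. Qed.

Lemma min_gt0 (d1 d2 : R) : 0 < d1 -> 0 < d2 -> 0 < Num.min d1 d2.
Proof. by move=> a b; rewrite lt_min a b. Qed.

Lemma bigO_ext m n k (f g : R -> 'M[C]_(m, n)) :
  (exists d : R, 0 < d /\ forall h, 0 < `|h| < d -> f h = g h) -> bigO k f -> bigO k g.
Proof.
move=> [d0 [d00 e]] [K [d [K0 [d0p b]]]].
exists K, (Num.min d0 d); split=> //; split; first exact: min_gt0.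
by move=> h /min_dom[h1 h2] i j; rewrite -e // b.
Qed.

Lemma bigO_add m n k (f g : R -> 'M[C]_(m, n)) :
  bigO k f -> bigO k g -> bigO k (fun h => f h + g h).
Proof.
move=> [K1 [d1 [K10 [d10 b1]]]] [K2 [d2 [K20 [d20 b2]]]].
exists (K1 + K2), (Num.min d1 d2); split; first exact: addr_ge0.
split; first exact: min_gt0.
move=> h /min_dom[h1 h2] i j; rewrite mxE mulrDl.
by apply: le_trans (ler_normD _ _) _; apply: lerD; [exact: b1|exact: b2].
Qed.

Lemma bigO_opp m n k (f : R -> 'M[C]_(m, n)) : bigO k f -> bigO k (fun h => - f h).
Proof.
move=> [K [d [K0 [d0 b]]]]; exists K, d; do 2!split=> //.
by move=> h hd i j; rewrite mxE normrN b.
Qed.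

Lemma bigO_sub m n k (f g : R -> 'M[C]_(m, n)) :
  bigO k f -> bigO k g -> bigO k (fun h => f h - g h).
Proof. by move=> bf bg; apply: bigO_add bf (bigO_opp bg). Qed.

Lemma bigO_mul m n p a b (f : R -> 'M[C]_(m, n)) (g : R -> 'M[C]_(n, p)) :
  bigO a f -> bigO b g -> bigO (a + b) (fun h => f h *m g h).
Proof.
move=> [K1 [d1 [K10 [d10 b1]]]] [K2 [d2 [K20 [d20 b2]]]].
exists (n%:R * (K1 * K2)), (Num.min d1 d2); split.
  by rewrite mulr_ge0 // ?ler0n // mulr_ge0.
split; first exact: min_gt0.
move=> h /min_dom[h1 h2] i j; rewrite mxE.
apply: le_trans (ler_norm_sum _ _ _) _.
have hs : \sum_(l < n) `|f h i l * g h l j| <=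
    \sum_(l < n) (K1 * (`|h| ^+ a)%:C * (K2 * (`|h| ^+ b)%:C)).
  apply: ler_sum => l _; rewrite normrM; apply: ler_pM => //; [exact: b1|exact: b2].
apply: le_trans hs _.
rewrite sumr_const card_ord exprD rmorphM /= -[X in X <= _]mulr_natl.
by rewrite [leLHS](_ : _ = n%:R * (K1 * K2) * ((`|h| ^+ a)%:C * (`|h| ^+ b)%:C)) //; ring.
Qed.

Lemma le_sum_entry m n (M : 'M[C]_(m, n)) i j :
  `|M i j| <= \sum_i0 \sum_j0 `|M i0 j0|.
Proof.
rewrite (bigD1 i) //= (bigD1 j) //= -addrA lerDl.
by apply: addr_ge0; apply: sumr_ge0 => k _ //; apply: sumr_ge0.
Qed.

Lemma bigO_const m n (M : 'M[C]_(m, n)) : bigO 0 (fun _ => M).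
Proof.
exists (\sum_i0 \sum_j0 `|M i0 j0|), 1; split.
  by rewrite sumr_ge0 // => k _; rewrite sumr_ge0.
split=> // h _ i j; rewrite expr0 rmorph1 mulr1; exact: le_sum_entry.
Qed.

Lemma bigO_scale m n a b (s : R -> C) (f : R -> 'M[C]_(m, n)) :
  bigOs a s -> bigO b f -> bigO (a + b) (fun h => s h *: f h).
Proof.
move=> [K1 [d1 [K10 [d10 b1]]]] [K2 [d2 [K20 [d20 b2]]]].
exists (K1 * K2), (Num.min d1 d2); split; first exact: mulr_ge0.
split; first exact: min_gt0.
move=> h /min_dom[h1 h2] i j; rewrite mxE normrM.
apply: le_trans (ler_pM _ _ (b1 h h1) (b2 h h2 i j)) _ => //.
by rewrite exprD rmorphM /= [leLHS](_ : _ = K1 * K2 * ((`|h| ^+ a)%:C * (`|h| ^+ b)%:C)) //; ring.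
Qed.

Lemma bigO_weaken m n k (f : R -> 'M[C]_(m, n)) : bigO k.+1 f -> bigO k f.
Proof.
move=> [K [d [K0 [d0 b]]]]; exists K, (Num.min d 1); split=> //.
split; first exact: min_gt0.
move=> h /min_dom[h1 /andP[_ h2]] i j; apply: le_trans (b h h1 i j) _.
apply: ler_wpM2l => //; rewrite lecR exprS ler_piMl ?exprn_ge0 //.
exact: ltW.
Qed.

Lemma bigOs_id : bigOs 1 (fun h => h%:C).
Proof.
exists 1, 1; do 2!split=> //.
by move=> h _; rewrite normC_real expr1 mul1r.
Qed.

Lemma bigOs_const (c : C) : bigOs 0 (fun _ => c).
Proof.
exists `|c|, 1; do 2!split=> //.
by move=> h _; rewrite expr0 rmorph1 mulr1.
Qed.

Lemma bigO_op12 N k (f : R -> 'M[C]_(N * N)) : bigO k f -> bigO k (fun h => op12 (f h)).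
Proof.
move=> [K [d [K0 [d0 b]]]]; exists K, d; do 2!split=> //.
move=> h hd i j; rewrite /op12 /tensmx mxE normrM.
apply: le_trans (ler_wpM2l (normr_ge0 _) (_ : `|_| <= 1)) _.
  by rewrite mxE; case: eqP => _; rewrite ?normr1 ?normr0.
by rewrite mulr1 b.
Qed.

Lemma bigO_op23 N k (f : R -> 'M[C]_(N * N)) : bigO k f -> bigO k (fun h => op23 (f h)).
Proof.
move=> [K [d [K0 [d0 b]]]]; exists K, d; do 2!split=> //.
move=> h hd i j; rewrite /op23 castmxE /tensmx mxE normrM.
apply: le_trans (ler_wpM2r (normr_ge0 _) (_ : `|_| <= 1)) _.
  by rewrite mxE; case: eqP => _; rewrite ?normr1 ?normr0.
by rewrite mul1r b.
Qed.


Lemma bigO_scalar n k (s : R -> C) : bigOs k s -> bigO k (fun h => (s h)%:M : 'M[C]_n).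
Proof.
move=> [K [d [K0 [d0 b]]]]; exists K, d; do 2!split=> //.
move=> h hd i j; rewrite mxE; case: eqP => _; rewrite ?mulr1n ?mulr0n ?normr0 ?b //.
by rewrite mulr_ge0 // cpow_ge0.
Qed.

Lemma bigO_le m n k k' (f : R -> 'M[C]_(m, n)) : (k <= k')%N -> bigO k' f -> bigO k f.
Proof.
move=> /subnK <-; elim: (k' - k)%N => [|l IH] // H.
by apply: IH; apply: bigO_weaken; rewrite addSn in H.
Qed.

Lemma bigO_zero n k (M : 'M[C]_n) (f : R -> 'M[C]_n) :
  (exists d : R, 0 < d /\ forall h, 0 < `|h| < d -> ((h%:C) ^+ k)%:M * M + f h = 0) ->
  bigO k.+1 f -> M = 0.
Proof.
move=> [d0 [d00 e]] [K [d [K0 [d0p b]]]].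
apply/matrixP=> i j; rewrite mxE.
have key : forall h : R, 0 < `|h| < Num.min d0 d -> `|M i j| <= K * `|h|%:C.
  move=> h /min_dom[h1 h2].
  have hp : 0 < `|h| by case/andP: h1.
  have := b h h2 i j.
  have sm : ((h%:C) ^+ k)%:M * M = (h%:C ^+ k) *: M by exact: mul_scalar_mx.
  have -> : f h = - ((h%:C ^+ k) *: M).
    by apply/eqP; rewrite -addr_eq0 addrC -sm (e h h1).
  rewrite mxE normrN mxE normrM normrX normC_real.
  rewrite exprS rmorphM /= mulrCA -rmorphXn /= (mulrC K) mulrCA.
  by rewrite ler_pM2l ?ltcR ?exprn_gt0 // mulrC.
apply/eqP; apply/negPn/negP => Mn0.
have m0 : 0 < `|M i j| by rewrite normr_gt0.
have rK : (complex.Re K)%:C = K by apply: RRe_real; apply: ger0_real.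
have rM : (complex.Re `|M i j|)%:C = `|M i j| by apply: RRe_real; apply: ger0_real.
set kR := complex.Re K in rK; set mR := complex.Re `|M i j| in rM.
have kR0 : 0 <= kR by rewrite -ler0c rK.
have mR0 : 0 < mR by rewrite -ltcR rM.
set dd := Num.min d0 d.
have dd0 : 0 < dd by apply: min_gt0.
set h := Num.min (dd / 2) (mR / (2 * (kR + 1))).
have h0 : 0 < h.
  by rewrite lt_min divr_gt0 //= ?divr_gt0 // mulr_gt0 // ltr_wpDl.
have hle1 : h <= dd / 2 by rewrite ge_min lexx.
have hle2 : h <= mR / (2 * (kR + 1)) by rewrite ge_min lexx orbT.
have := key h; rewrite gtr0_norm // h0 /=.
have -> : (h < dd) = true by apply/idP; apply: le_lt_trans hle1 _; rewrite ltr_pdivrMr // ltr_pMr // ltr1n.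
move=> /(_ isT); rewrite -rK -rM -rmorphM lecR => H.
rewrite ler_pdivlMr ?mulr_gt0 ?ltr_wpDl // in hle2.
have hk : 0 <= kR * h by rewrite mulr_ge0 // ltW.
nra.
Qed.

Lemma expR_bound (t : R) : `|t| <= 2^-1 -> 0 <= expR t - 1 - t <= 2 * t ^+ 2.
Proof.
move=> ht; have /andP[ta tb] : -(2^-1) <= t <= 2^-1 by rewrite -ler_norml.
have e1 := expR_ge1Dx t.
have e2 := expR_ge1Dx (- t).
have e3 := expRxMexpNx_1 t.
have e0 := expR_ge0 t.
apply/andP; split; first lra.
have h1 : expR t * (1 - t) <= 1.
  by rewrite -[X in _ <= X]e3; apply: ler_wpM2l.
have h2 : 0 <= t ^+ 2 * (1 - 2 * t) by rewrite mulr_ge0 ?sqr_ge0 //; lra.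
nra.
Qed.

Lemma gexp_bound (h : R) : `|h| <= 2^-1 ->
  `|expR (- h) - expR h + (h + h)| <= 4 * `|h| ^+ 2.
Proof.
move=> hh.
have /andP[a1 a2] := expR_bound hh.
have hh' : `|- h| <= 2^-1 by rewrite normrN.
have /andP[b1 b2] := expR_bound hh'.
rewrite sqrrN in b2; rewrite real_normK ?num_real //.
rewrite ler_norml; apply/andP; split; lra.
Qed.

Lemma expm1_bound (h : R) : `|h| <= 2^-1 -> `|expR h - 1| <= 2 * `|h|.
Proof.
move=> hh; have /andP[a1 a2] := expR_bound hh.
have /andP[ta tb] : -(2^-1) <= h <= 2^-1 by rewrite -ler_norml.
have hs : h ^+ 2 <= 2^-1 * `|h|.
  by rewrite -real_normK ?num_real // expr2 ler_wpM2r.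
have /andP[u1 u2] : - `|h| <= h <= `|h| by rewrite -ler_norml.
rewrite ler_norml; apply/andP; split; lra.
Qed.

End Analytic.

Section Extra.
Variable R : realType.
Local Notation C := R[i].
Lemma bigO_addL n a b (f g : R -> 'M[C]_n) :
  bigO a f -> bigO b g -> bigO (minn a b) (fun h => f h + g h).
Proof.
move=> ha hb; apply: bigO_add; [apply: bigO_le ha | apply: bigO_le hb].
  exact: geq_minl.
exact: geq_minr.
Qed.
Lemma bigO_oppL n a (f : R -> 'M[C]_n) : bigO a f -> bigO a (fun h => - f h).
Proof. exact: bigO_opp. Qed.
Lemma bigO_mulL n a b (f g : R -> 'M[C]_n) :
  bigO a f -> bigO b g -> bigO (a + b) (fun h => f h * g h).
Proof. exact: bigO_mul. Qed.
Lemma bigO_constL n (M : 'M[C]_n) : bigO 0 (fun _ : R => M).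
Proof. exact: bigO_const. Qed.
Lemma inv_invol (n : nat) (A : 'M[C]_n) : A *m A = 1%:M -> invmx A = A.
Proof.
move=> AA; have [Au _] := mulmx1_unit AA.
by rewrite -[invmx A]mulmx1 -AA mulmxA mulVmx // mul1mx.
Qed.
Lemma central_scalar n (c : C) (t : 'M[C]_n) : c%:M * t = t * c%:M.
Proof. exact: (esym (scalar_mxC c t)). Qed.
Lemma half_mx n : ((2 : C)^-1)%:M + ((2 : C)^-1)%:M = 1 :> 'M[C]_n.
Proof.
apply/matrixP => i j; rewrite !mxE -mulrnDl; congr (_ *+ _).
by rewrite [RHS](splitr 1) mul1r.
Qed.
Lemma addsub3 (V : zmodType) (a b c : V) : a + b + (c - a - b) = c.
Proof.
by rewrite -[c - a - b]addrA -opprD [LHS]addrC subrK.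
Qed.
End Extra.

Ltac synthO :=
  lazymatch goal with
  | |- bigO _ (fun _ => ?c) => apply: bigO_constL
  | |- bigO _ (fun h => @?f h + @?g h) => eapply (bigO_addL (f:=f) (g:=g)); [synthO | synthO]
  | |- bigO _ (fun h => - @?f h) => eapply (bigO_oppL (f:=f)); synthO
  | |- bigO _ (fun h => @?f h * @?g h) => eapply (bigO_mulL (f:=f) (g:=g)); [synthO | synthO]
  | _ => eassumption
  end.

Theorem mainTheorem2 (R : realType) (N : nat)
    (F : 'M[R[i]]_(N * N)) (Rq : R -> 'M[R[i]]_(N * N)) (r : 'M[R[i]]_(N * N)) :
  involutive_symmetry F ->
  (exists delta : R, 0 < delta /\ forall q : R, `|q - 1| < delta ->
      (q != 1 -> hecke_symmetry q%:C (Rq q)) /\ compatible (Rq q) F) ->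
  analytic_at1 Rq ->
  Rq 1 = F ->
  first_order_coeff Rq F r ->
  (forall u v : R[i], u != v ->
     bar21 F (rfun F r v u) + rfun F r u v = 0) /\
  (forall u v w : R[i], u != v -> u != w -> v != w ->
     commutator (bar12 (rfun F r u v)) (bar13 F (rfun F r u w))
     + commutator (bar12 (rfun F r u v)) (bar23 F (rfun F r v w))
     + commutator (bar13 F (rfun F r u w)) (bar23 F (rfun F r v w)) = 0).
Proof.
move=> [[Fu Fbr] FF] [dq [dq0 Hq]] _ _ [K0 [d0 [d00 Hfo]]].
have FF' : F * F = 1 := FF.
have PP : op12 F * op12 F = 1.
  by change (op12 F *m op12 F = 1%:M); rewrite -op12M FF op12_1.
have QQ : op23 F * op23 F = 1.
  by change (op23 F *m op23 F = 1%:M); rewrite -op23M FF op23_1.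
have PQP : op12 F * op23 F * op12 F = op23 F * op12 F * op23 F := Fbr.
have invP : invmx (op12 F) = op12 F by apply: inv_invol; exact: PP.
have invQ : invmx (op23 F) = op23 F by apply: inv_invol; exact: QQ.
pose dd := Num.min (Num.min (dq / 2) d0) 2^-1.
have dd0 : 0 < dd by rewrite !lt_min divr_gt0 //= d00 invr_gt0 ltr0n.
have dom : forall h : R, 0 < `|h| < dd ->
    [/\ `|h| < d0, `|h| <= 2^-1, `|expR h - 1| < dq & expR h != 1].
  move=> h /andP[h0]; rewrite !lt_min => /andP[/andP[h1 h2] h3].
  split => //; first exact: ltW.
  - apply: le_lt_trans (expm1_bound (ltW h3)) _.
    by rewrite -ltr_pdivlMl // mulrC.
  - apply/eqP => e1; move: h0; rewrite -expR0 in e1.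
    by rewrite (expR_inj e1) normr0 ltxx.
pose E := fun h : R => Rq (expR h) *m F - 1%:M - h%:C *: r.
have hE : bigO 2 E.
  exists (`|K0|%:C), d0; split; first by rewrite ler0c normr_ge0.
  split=> // h /andP[_ hd] i j; apply: le_trans (Hfo h hd i j) _.
  rewrite -rmorphM lecR (real_normK (num_real h)).
  by apply: ler_wpM2r; [exact: sqr_ge0 | exact: ler_norm].
pose h2 := fun h : R => ((h%:C)%:M : 'M[R[i]]_(N * N)).
have hh2 : bigO 1 h2 by apply: bigO_scalar; exact: bigOs_id.
pose g := fun h : R => ((expR h)%:C)^-1 - (expR h)%:C + (h%:C + h%:C).
have hg : bigO 2 (fun h => ((g h)%:M : 'M[R[i]]_(N * N))).
  apply: bigO_scalar; exists 4%:C, 2^-1; split; first by rewrite ler0c.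
  split; first by rewrite invr_gt0 ltr0n.
  move=> h /andP[_ hd].
  have -> : g h = (expR (- h) - expR h + (h + h))%:C.
    by rewrite /g !rmorphD rmorphN /= expRN fmorphV.
  by rewrite normC_real -rmorphM lecR gexp_bound // ltW.
have SEq : forall h, (1 + h2 h * r + E h) * F = Rq (expR h).
  move=> h; rewrite /h2 /E.
  change ((1%:M + (h%:C)%:M *m r + (Rq (expR h) *m F - 1%:M - h%:C *: r)) *m F = Rq (expR h)).
  by rewrite mul_scalar_mx addsub3 -mulmxA FF mulmx1.
have HK : F * r * F + r = F + F.
  suff HK0 : F * r * F + r - F - F = 0.
    by apply/eqP; rewrite -subr_eq0 opprD addrA HK0.
  apply: (@bigO_zero _ _ 1 _ (fun h => BH F (h2 h * r) (E h) ((g h)%:M) (h2 h))).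
    exists dd; split=> // h hd.
    have [hd0 hhalf hq q1] := dom h hd.
    have [[_ [Hhk _]] _] : hecke_symmetry (expR h)%:C (Rq (expR h)) /\ True.
      by split=> //; apply: (Hq _ hq).1.
    have qq1 : ((expR h)%:C)%:M * (((expR h)%:C)^-1)%:M = 1 :> 'M[R[i]]_(N * N).
      change (((expR h)%:C)%:M *m (((expR h)%:C)^-1)%:M = 1%:M :> 'M[R[i]]_(N * N)).
      rewrite -scalar_mxM mulfV //.
      by rewrite fmorph_eq0 gt_eqF // expR_gt0.
    have := hecke_expand (r:=r) (E:=E h) FF' qq1 (central_scalar _) (central_scalar _) (central_scalar (h%:C)).
    have SE := SEq h; rewrite /h2 in SE; rewrite SE => /(_ Hhk).
    have -> : ((((expR h)%:C)^-1)%:M - ((expR h)%:C)%:M + (h2 h + h2 h) : 'M[R[i]]_(N * N))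
      = (g h)%:M by rewrite /g /h2 !raddfD raddfN.
    by rewrite expr1 /h2 => H; exact: H.
  rewrite /BH; eapply bigO_le; last synthO; done.
pose h3 := fun h : R => ((h%:C)%:M : 'M[R[i]]_(N * N * N)).
have hh3 : bigO 1 h3 by apply: bigO_scalar; exact: bigOs_id.
pose e := fun h : R => op12 (E h).
have he : bigO 2 e by apply: bigO_op12.
pose P := op12 F. pose Q := op23 F. pose x := op12 r.
have CY : CYB P Q x = 0.
  apply: (@bigO_zero _ _ 2 _ (fun h => RemE P Q (h3 h * x) (e h))).
    exists dd; split=> // h hd.
    have [hd0 hhalf hq q1] := dom h hd.
    have [[[_ Hbr] _] [Hc _]] : hecke_symmetry (expR h)%:C (Rq (expR h)) /\ compatible (Rq (expR h)) F.
      by split; [apply: (Hq _ hq).1 | apply: (Hq _ hq).2].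
    have Y : op12 (Rq (expR h)) = (1 + h3 h * x + e h) * P.
      rewrite -SEq; change (op12 ((1 + h2 h * r + E h) *m F) = (1 + h3 h * x + e h) * P).
      rewrite op12M (op12D (1 + h2 h * r) (E h)) (op12D 1 (h2 h * r)) op12_1.
      have -> : op12 (h2 h * r) = h3 h * x.
        rewrite /h2 /h3 /x.
        change (op12 ((h%:C)%:M *m r) = (h%:C)%:M *m op12 r).
        by rewrite !mul_scalar_mx op12Z.
      reflexivity.
    have Z : op23 (Rq (expR h)) = P * Q * ((1 + h3 h * x + e h) * P) * Q * P.
      apply: compat_solve PP QQ _; rewrite -Y; exact: Hc.
    have Hb : ((1 + h3 h * x + e h) * P) * (P * Q * ((1 + h3 h * x + e h) * P) * Q * P) * ((1 + h3 h * x + e h) * P)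
      = (P * Q * ((1 + h3 h * x + e h) * P) * Q * P) * ((1 + h3 h * x + e h) * P) * (P * Q * ((1 + h3 h * x + e h) * P) * Q * P).
      by rewrite -Z -Y; exact: Hbr.
    have QY := qybe_of_braid PP QQ PQP Hb.
    have := qybe_expand (hh := h3 h) PP QQ (central_scalar _) QY.
    by move=> H; rewrite expr2 scalar_mxM; exact: H.
  rewrite /RemE /commr; eapply bigO_le; last synthO; done.
have HKx : P * x * P + x = P + P.
  change (op12 F *m op12 r *m op12 F + op12 r = op12 F + op12 F).
  have HKm : F *m r *m F + r = F + F := HK.
  by rewrite -!op12M -!op12D HKm.
have hy := hyx PP HKx (half_mx _ _) (central_scalar (n := N * N * N) (2^-1)).
have CYy := cy_scale (central_scalar (n := N * N * N) (2^-1)) CY.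
split.
  move=> u v uv; rewrite /bar21 /rfun -!mul_scalar_mx.
  have uv' : u - v != 0 by rewrite subr_eq0.
  have vu' : v - u != 0 by rewrite subr_eq0 eq_sym.
  have kk1 : ((v / (v - u))%:M + (u / (u - v))%:M : 'M[R[i]]_(N * N)) = 1.
    apply/matrixP => i j; rewrite !mxE -mulrnDl; congr (_ *+ _).
    by field; rewrite ?uv' ?vu'.
  exact: (part1_alg FF' HK kk1 (half_mx _ _) (central_scalar _) (central_scalar _) (central_scalar _)).
move=> u v w uv uw vw.
rewrite /bar12 /bar13 /bar23 /rfun /commutator invP invQ !op12B !op12Z -!mul_scalar_mx.
have uv' : u - v != 0 by rewrite subr_eq0.
have uw' : u - w != 0 by rewrite subr_eq0.
have vw' : v - w != 0 by rewrite subr_eq0.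
have E0 : u / (u - v) * (u / (u - w)) - u / (u - v) * (v / (v - w)) + u / (u - w) * (v / (v - w))
    = u / (u - w) by field; rewrite ?uv' ?uw' ?vw'.
have kk : (u / (u - v))%:M * (u / (u - w))%:M - (u / (u - v))%:M * (v / (v - w))%:M
    + (u / (u - w))%:M * (v / (v - w))%:M = (u / (u - w))%:M :> 'M[R[i]]_(N * N * N).
  change ((u / (u - v))%:M *m (u / (u - w))%:M - (u / (u - v))%:M *m (v / (v - w))%:M
    + (u / (u - w))%:M *m (v / (v - w))%:M = (u / (u - w))%:M :> 'M[R[i]]_(N * N * N)).
  rewrite -!scalar_mxM; apply/matrixP => i j; rewrite !mxE.
  by rewrite -mulrnBl -mulrnDl E0.
exact: (cybe_final PP QQ PQP hy (central_scalar _) (central_scalar _) (central_scalar _) kk CYy).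
Qed.
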